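(* Let $K$ be a field, $\kappa$ an infinite cardinal, and $R=R(\kappa,K)$ the $K$-subalgebra of $K^\kappa$ consisting of all sequences that are constant except for finitely many terms. Regard $K^\kappa$ as a right $R$-module via componentwise multiplication. For each cardinal $\aleph_0\le\lambda\le\kappa^+$ let $M_\lambda$ be the submodule of $K^\kappa$ consisting of those elements whose support has cardinality $<\lambda$. Then $M_{\aleph_0}=\mathrm{Soc}(R)$, $M_{\kappa^+}=K^\kappa$, $M_\lambda\subsetneq M_\mu$ for all cardinals $\aleph_0\le\lambda<\mu\le\kappa^+$, and $M_\lambda=\bigcup_{\mu<\lambda}M_\mu$ for every limit cardinal $\lambda$ with $\aleph_0<\lambda\le\kappa^+$ (so the chain is continuous). Moreover: (i) $\gamma(R)=\kappa^+$; (ii) for each cardinal $\aleph_0\le\lambda\le\kappa$, the module $M_\lambda$ is strictly $\lambda$-injective; (iii) $M_{\kappa^+}=K^\kappa$ is injective.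
   Context: For a ring $R$ and an infinite cardinal $\lambda$, a right $R$-module $M$ is $\lambda$-injective if for every right ideal $I$ of $R$ generated by fewer than $\lambda$ elements and every homomorphism $\varphi: I\to M$ there is a homomorphism $\psi:R\to M$ with $\psi\restriction I=\varphi$. $M$ is strictly $\lambda$-injective if it is $\lambda$-injective but not $\lambda^+$-injective. $\gamma(R)$ is the least infinite cardinal $\lambda$ such that every right ideal of $R$ is generated by fewer than $\lambda$ elements. The support of $r\in K^\kappa$ is $\{\alpha<\kappa\mid r_\alpha\neq 0\}$. *)

(* Defs.v *)
From HB Require Import structures.
From mathcomp Require Import all_boot all_order all_algebra.
From mathcomp Require Import boolp classical_sets functions cardinality.
Set Implicit Arguments. Unset Strict Implicit. Unset Printing Implicit Defensive.
Import Order.TTheory GRing.Theory.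
Local Open Scope classical_set_scope.
Local Open Scope card_scope.
Local Open Scope ring_scope.

Section Defs.
Variables (K : fieldType) (I : Type).
(* K^kappa is modelled as I -> K, where the type I has cardinality kappa. *)
Notation V := (I -> K).

Definition vzero : V := fun _ => 0.
Definition vadd (x y : V) : V := fun i => x i + y i.
Definition vmul (x r : V) : V := fun i => x i * r i.

Definition Rset : set V := [set r | exists c : K, finite_set [set i | r i != c]].

Definition support (x : V) : set I := [set i | x i != 0].

Definition right_ideal (J : set V) : Prop :=
  J `<=` Rset /\ J vzero /\ (forall x y, J x -> J y -> J (vadd x y)) /\
  (forall x r, J x -> Rset r -> J (vmul x r)).

Definition gen_ideal (G : set V) : set V :=
  [set x | forall J, right_ideal J -> G `<=` J -> J x].

Definition minimal_right_ideal (J : set V) : Prop :=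
  right_ideal J /\ J <> [set vzero] /\
  (forall J', right_ideal J' -> J' `<=` J -> J' = [set vzero] \/ J' = J).

Definition Soc : set V :=
  gen_ideal (\bigcup_(J in minimal_right_ideal) J).

(* Cardinals in [aleph_0, kappa^+] are encoded: [Crd L] is the cardinal |L|
   for an (infinite) L : set I, and [Plus] is kappa^+. *)
Inductive kcard := Crd of set I | Plus.

Definition lt_card (T : Type) (S : set T) (l : kcard) : Prop :=
  match l with
  | Crd L => S #<= L /\ ~ (L #<= S)
  | Plus => S #<= [set: I]   (* |S| < kappa^+  iff  |S| <= kappa *)
  end.

Definition kcard_lt (l m : kcard) : Prop :=
  match l with Crd L => lt_card L m | Plus => False end.

Definition kcard_ok (l : kcard) : Prop :=
  match l with Crd L => infinite_set L | Plus => True end.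

Definition kcard_limit (l : kcard) : Prop :=
  kcard_ok l /\ forall m, kcard_ok m -> kcard_lt m l ->
    exists n, kcard_ok n /\ kcard_lt m n /\ kcard_lt n l.

Definition Msub (l : kcard) : set V := [set x | lt_card (support x) l].

Definition hom_on (J M : set V) (phi : V -> V) : Prop :=
  (forall x, J x -> M (phi x)) /\
  (forall x y, J x -> J y -> phi (vadd x y) = vadd (phi x) (phi y)) /\
  (forall x r, J x -> Rset r -> phi (vmul x r) = vmul (phi x) r).

Definition gen_by (small : set V -> Prop) (J : set V) : Prop :=
  exists G, G `<=` Rset /\ small G /\ J = gen_ideal G.

Definition ext_injective (small : set V -> Prop) (M : set V) : Prop :=
  forall J, right_ideal J -> gen_by small J ->
  forall phi, hom_on J M phi ->
  exists psi, hom_on Rset M psi /\ (forall x, J x -> psi x = phi x).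

Definition lam_injective (l : kcard) (M : set V) : Prop :=
  ext_injective (fun G => lt_card G l) M.

(* strictly lambda-injective, lambda = |L|: lambda-injective but not
   lambda^+-injective (fewer than lambda^+ generators = at most |L|) *)
Definition strictly_lam_injective (L : set I) (M : set V) : Prop :=
  lam_injective (Crd L) M /\ ~ ext_injective (fun G => G #<= L) M.

(* injective (Baer's criterion: extension from every right ideal) *)
Definition injective_mod (M : set V) : Prop :=
  ext_injective (fun _ => True) M.

Definition gamma_is (l : kcard) : Prop :=
  kcard_ok l /\
  (forall J, right_ideal J -> gen_by (fun G => lt_card G l) J) /\
  (forall m, kcard_ok m -> kcard_lt m l ->
     exists J, right_ideal J /\ ~ gen_by (fun G => lt_card G m) J).

End Defs.
Arguments Plus {I}.

(* Main.v *)
Require Import Defs.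
From mathcomp Require Import all_boot all_order all_algebra.
From mathcomp Require Import boolp classical_sets functions cardinality.
Local Open Scope classical_set_scope.
Local Open Scope card_scope.

Module Aux.
Set Implicit Arguments. Unset Strict Implicit. Unset Printing Implicit Defensive.
Import GRing.Theory.

Lemma card_le_fun T U (A : set T) (B : set U) (f : T -> U) :
  (forall x, A x -> B (f x)) ->
  (forall x y, A x -> A y -> f x = f y -> x = y) -> A #<= B.
Proof.
move=> fAB finj; elim/Ppointed: U => U in B f fAB finj *.
  have -> : A = set0 by apply/seteqP; split=> // x Ax; exact: (no (f x)).
  exact: card_ge0.
apply/pcard_leP/injfunPex; exists f.
  by move=> x; apply: fAB.
by move=> x y /set_mem Ax /set_mem Ay; apply: finj.
Qed.

Lemma card_le_inv T U (A : set T) (B : set U) (x0 : T) : A x0 -> A #<= B ->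
  exists f : T -> U, (forall x, A x -> B (f x)) /\
    (forall x y, A x -> A y -> f x = f y -> x = y).
Proof.
move=> Ax0; elim/Ppointed: U => U in B *.
  rewrite (empty_eq0 B) => /card_le0P A0; by move: Ax0; rewrite A0.
move=> /pcard_leP[f]; exists f; split.
  by move=> x Ax; apply: 'funS_f.
by move=> x y Ax Ay; apply: 'inj_f; rewrite inE.
Qed.
Arguments card_le_inv {T U A B} x0.

Lemma card_leX T U (A : set T) (B : set U) :
  A #<= B -> A `*` [set: nat] #<= B `*` [set: nat].
Proof.
have [->|/set0P[x0 Ax0]] := eqVneq A set0.
  by rewrite set0X => _; apply: card_ge0.
move=> /(card_le_inv x0 Ax0)[f [fAB finj]].
apply: (@card_le_fun _ _ _ _ (fun z => (f z.1, z.2))).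
  by move=> z [Az _]; split => //; apply: fAB.
move=> [a n] [b m] [Aa _] [Ab _] /= [/finj-> // ->] //.
Qed.

Lemma card_le_nat_inf T (A : set T) : infinite_set A -> [set: nat] #<= A.
Proof. by move/infiniteP. Qed.

Lemma countable_infX T (C : set T) : countable C -> infinite_set C ->
  C `*` [set: nat] #<= C.
Proof.
move=> cC iC.
apply: card_le_trans (card_leX cC) _.
rewrite setXTT.
apply: card_le_trans _ (card_le_nat_inf iC).
by move: card_nat2; rewrite card_eq_le => /andP[].
Qed.

Lemma infiniteX T (A : set T) : infinite_set A -> A `*` [set: nat] #<= A.
Proof.
move=> iA.
pose P := fun (F : set (set T)) =>
  (forall C, F C -> [/\ C `<=` A, countable C & infinite_set C]) /\
  (forall C D, F C -> F D -> C = D \/ C `&` D = set0).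
have [F [[PF1 PF2] Fmax]] : exists F, P F /\ forall B, F `<` B -> ~ P B.
  apply: Zorn_bigcup => FF FFP Ftot; split.
    by move=> C [X FFX XC]; apply: (FFP X FFX).1.
  move=> C D [X FFX XC] [Y FFY YD].
  have [XY|YX] := Ftot X Y FFX FFY.
    by apply: (FFP Y FFY).2 => //; apply: XY.
  by apply: (FFP X FFX).2 => //; apply: YX.
pose U := \bigcup_(C in F) C.
have UA : U `<=` A by move=> x [C FC Cx]; have [+ _ _] := PF1 C FC; apply.
have finR : finite_set (A `\` U).
  apply: contrapT => iR.
  have [g [gR ginj]] := card_le_inv 0%N (I : [set: nat] 0%N) (card_le_nat_inf iR).
  pose C := g @` [set: nat].
  have gi : {in [set: nat] &, injective g} by move=> x y _ _; apply: ginj.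
  have Cinf : infinite_set C.
    by move=> fC; apply: infinite_nat; rewrite -(eq_finite_set (inj_card_eq gi)).
  have Ccnt : countable C by apply: card_le_trans (card_image_le g setT) _.
  apply: (Fmax (F `|` [set C])).
    split; first by move=> D FD; left.
    move=> /(_ C (or_intror erefl)) FC.
    have [_ Rg0] := gR 0%N I; apply: Rg0; exists C => //; by exists 0%N.
  split.
    move=> D [FD|->]; first exact: PF1.
    by split => // _ [n _ <-]; have [] := gR n I.
  have CU : forall D, F D -> C `&` D = set0.
    move=> D FD; apply/seteqP; split => // x [[n _ gx] Dx].
    by have [_ nU] := gR n I; apply: nU; exists D => //; rewrite gx.
  move=> D E [FD|->] [FE|->]; first exact: PF2.
  - by right; rewrite setIC; apply: CU.
  - by right; apply: CU.
  - by left.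
have [C0 FC0] : exists C0, F C0.
  apply: contrapT => nF; apply: iA; apply: sub_finite_set finR => x Ax.
  by split => // -[C FC _]; apply: nF; exists C.
have [_ _ iC0] := PF1 C0 FC0.
have [c0 c0C] := infinite_setN0 iC0.
have hj : forall C, exists j : T * nat -> T, F C ->
   (forall z, (C `*` [set: nat]) z -> C (j z)) /\
   (forall z w, (C `*` [set: nat]) z -> (C `*` [set: nat]) w -> j z = j w -> z = w).
  move=> C; case: (pselect (F C)) => FC; last by exists (fun _ => c0).
  have [_ cC iC] := PF1 C FC; have [c cc] := infinite_setN0 iC.
  have [j hj] := card_le_inv (c, 0%N) (conj cc I : (C `*` [set: nat]) (c, 0%N))
    (countable_infX cC iC).
  by exists j.
have [jf hjf] := choice hj.
have hp : forall x, exists C, U x -> F C /\ C x.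
  move=> x; case: (pselect (U x)) => [[C FC Cx]|nU]; [by exists C|by exists set0].
have [pc hpc] := choice hp.
have UX : U `*` [set: nat] #<= U.
  apply: (@card_le_fun _ _ _ _ (fun z => jf (pc z.1) z)).
    move=> z [Uz _]; have [Fp pz] := hpc _ Uz; exists (pc z.1) => //.
    by apply: (hjf _ Fp).1.
  move=> z w [Uz _] [Uw _] e.
  have [Fz pz] := hpc _ Uz; have [Fw pw] := hpc _ Uw.
  have jz := (hjf _ Fz).1 z (conj pz I); have jw := (hjf _ Fw).1 w (conj pw I).
  have epc : pc z.1 = pc w.1.
    case: (PF2 _ _ Fz Fw) => // D0.
    have : (pc z.1 `&` pc w.1) (jf (pc w.1) w) by split=> //; rewrite -e.
    by rewrite D0.
  apply: (hjf _ Fz).2; [exact: (conj pz I)| by split => //; rewrite epc | by rewrite e epc].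
have /countable_injP[r rinj] := finite_set_countable finR.
have AUX : A #<= U `*` [set: nat].
  apply: (@card_le_fun _ _ _ _ (fun x => if pselect (U x) then (x, 0%N) else (c0, (r x).+1))).
    move=> x Ax; case: pselect => Ux; split => //; exists C0 => //.
  move=> x y Ax Ay; case: pselect => Ux; case: pselect => Uy; case => //.
  move=> e; apply: rinj => //; rewrite inE; split => //.
apply: card_le_trans (card_leX AUX) _.
apply: card_le_trans (card_leX UX) _.
apply: card_le_trans UX _.
exact: subset_card_le UA.
Qed.

Lemma cover_le T U (S : set T) (G : set U) (F : U -> set T) :
  S `<=` \bigcup_(g in G) F g -> (forall g, G g -> finite_set (F g)) ->
  S #<= G `*` [set: nat].
Proof.
move=> SG Gfin.
have [->|/set0P[s0 Ss0]] := eqVneq S set0; first exact: card_ge0.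
have [g0 Gg0 _] := SG _ Ss0.
have hg : forall s, exists g, S s -> G g /\ F g s.
  move=> s; case: (pselect (S s)) => Ss; last by exists g0.
  by have [g Gg Fgs] := SG _ Ss; exists g.
have [pg hpg] := choice hg.
have hr : forall g, exists r : T -> nat, G g -> {in F g &, injective r}.
  move=> g; case: (pselect (G g)) => Gg; last by exists (fun _ => 0%N).
  by have /countable_injP[r rinj] := finite_set_countable (Gfin g Gg); exists r.
have [rg hrg] := choice hr.
apply: (@card_le_fun _ _ _ _ (fun s => (pg s, rg (pg s) s))).
  by move=> s Ss; have [] := hpg s Ss.
move=> s t Ss St [e1 e2].
have [Gs Fs] := hpg s Ss; have [Gt Ft] := hpg t St.
apply: (hrg _ Gs); rewrite ?inE //; first by rewrite e1.
by rewrite e2 e1.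
Qed.

Definition small T U (L : set U) (S : set T) := S #<= L /\ ~ (L #<= S).

Lemma sm_finite T U (L : set U) (S : set T) : infinite_set L -> finite_set S -> small L S.
Proof.
move=> iL fS; have [n /card_eqPle[Sn _]] := fS; split; last first.
  by move=> LS; apply: iL; apply: card_le_finite LS fS.
apply: card_le_trans Sn _; apply: card_le_trans (card_le_nat_inf iL).
by apply: subset_card_le.
Qed.

Lemma sm_le T T' U (L : set U) (S : set T) (X : set T') : small L X -> S #<= X -> small L S.
Proof.
move=> [XL nLX] SX; split; first exact: card_le_trans SX XL.
by move=> LS; apply: nLX; apply: card_le_trans LS SX.
Qed.

Lemma sm_cover T T' U (L : set U) (S : set T) (G : set T') (F : T' -> set T) :
  infinite_set L -> small L G ->
  S `<=` \bigcup_(g in G) F g -> (forall g, G g -> finite_set (F g)) -> small L S.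
Proof.
move=> iL sG SG Gfin; case: (pselect (finite_set G)) => fG.
  apply: sm_finite => //; apply: sub_finite_set SG _; exact: bigcup_finite.
apply: sm_le sG _; apply: card_le_trans (cover_le SG Gfin) _.
exact: infiniteX.
Qed.

Lemma sm_U T U (L : set U) (X F : set T) : infinite_set L -> small L X -> finite_set F ->
  small L (X `|` F).
Proof.
move=> iL sX fF.
have [->|/set0P[x0 Xx0]] := eqVneq X set0; first by rewrite set0U; apply: sm_finite.
apply: (@sm_cover _ _ _ _ _ X (fun x => [set x] `|` F)) => //.
  move=> y [Xy|Fy]; first by exists y => //; left.
  by exists x0 => //; right.
by move=> g _; rewrite finite_setU; split => //; apply: finite_set1.
Qed.

Section Ring.
Variables (K : fieldType) (I : Type).
Local Open Scope ring_scope.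
Local Notation V := (I -> K).
Local Notation Rs := (@Rset K I).
Local Notation supp := (@Defs.support K I).

Definition one : V := fun _ => 1.
Definition chi (S : set I) : V := fun i => if `[< S i >] then 1 else 0.
Definition pinv (x : V) : V := fun i => (x i)^-1.

Lemma chi_at S i : S i -> chi S i = 1.
Proof. by move=> Si; rewrite /chi; case: (asboolP (S i)). Qed.

Lemma chi_nat S i : ~ S i -> chi S i = 0.
Proof. by move=> Si; rewrite /chi; case: (asboolP (S i)). Qed.

Lemma suppE (x : V) i : supp x i = (x i != 0).
Proof. by []. Qed.

Lemma vmulC (x y : V) : vmul x y = vmul y x.
Proof. by apply/funext => i; rewrite /vmul mulrC. Qed.

Lemma vmulA (x y z : V) : vmul x (vmul y z) = vmul (vmul x y) z.
Proof. by apply/funext => i; rewrite /vmul mulrA. Qed.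

Lemma supp_ind S : supp (chi S) = S.
Proof.
by apply/seteqP; split => i; rewrite /Defs.support /= /chi;
  case: (asboolP (S i)) => Si //; rewrite ?eqxx ?oner_neq0.
Qed.

Lemma Rs_fin (x : V) : finite_set (supp x) -> Rs x.
Proof. by move=> fx; exists 0. Qed.

Lemma Rs_cofin S : finite_set (~` S) -> Rs (chi S).
Proof.
move=> fS; exists 1; apply: sub_finite_set fS => i /=; rewrite /chi.
by case: (asboolP (S i)) => //; rewrite eqxx.
Qed.

Lemma Rs_chi_fin S : finite_set S -> Rs (chi S).
Proof. by move=> fS; apply: Rs_fin; rewrite supp_ind. Qed.

Lemma Rs_supp (x : V) : Rs x -> finite_set (supp x) \/ finite_set (~` supp x).
Proof.
move=> [c fc]; case: (eqVneq c 0) => [c0|cn0]; [left|right];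
  apply: sub_finite_set fc => i /=.
  by rewrite c0.
move=> /negP; rewrite negbK => /eqP ->; by rewrite eq_sym.
Qed.

Lemma Rs_add (x y : V) : Rs x -> Rs y -> Rs (vadd x y).
Proof.
move=> [c fc] [d fd]; exists (c + d).
have : finite_set ([set i | x i != c] `|` [set i | y i != d]) by rewrite finite_setU.
apply: sub_finite_set => i /= h.
case: (eqVneq (x i) c) => [xc|]; last by left.
by right; apply: contraNneq h; rewrite /vadd xc => ->.
Qed.

Lemma Rs_mul (x y : V) : Rs x -> Rs y -> Rs (vmul x y).
Proof.
move=> [c fc] [d fd]; exists (c * d).
have : finite_set ([set i | x i != c] `|` [set i | y i != d]) by rewrite finite_setU.
apply: sub_finite_set => i /= h.
case: (eqVneq (x i) c) => [xc|]; last by left.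
by right; apply: contraNneq h; rewrite /vmul xc => ->.
Qed.

Lemma Rs_pinv (x : V) : Rs x -> Rs (pinv x).
Proof.
move=> [c fc]; exists c^-1; apply: sub_finite_set fc => i /=.
by apply: contraNneq; rewrite /pinv => ->.
Qed.

Lemma supp0 : supp (@vzero K I) = set0.
Proof. by apply/seteqP; split => i //; rewrite /Defs.support /= /vzero eqxx. Qed.

Lemma Rs_one : Rs one.
Proof.
exists 1; apply: sub_finite_set (finite_set0 I) => i /=.
by rewrite /one eqxx.
Qed.

Lemma Rs_ideal : right_ideal Rs.
Proof.
split => //; split; first by apply: Rs_fin; rewrite supp0; exact: finite_set0.
by split; [exact: Rs_add|exact: Rs_mul].
Qed.

Lemma vmul_pinv (x : V) : vmul x (pinv x) = chi (supp x).
Proof.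
apply/funext => i; rewrite /vmul /pinv; case: (eqVneq (x i) 0) => [xi|xi].
  by rewrite chi_nat ?xi ?mul0r // suppE xi eqxx.
by rewrite chi_at ?mulfV.
Qed.

Lemma vmul_chi_supp (x : V) : vmul (chi (supp x)) x = x.
Proof.
apply/funext => i; rewrite /vmul; case: (eqVneq (x i) 0) => [xi|xi].
  by rewrite xi mulr0.
by rewrite chi_at ?mul1r.
Qed.

Lemma chi_idem S : vmul (chi S) (chi S) = chi S.
Proof.
by apply/funext => i; rewrite /vmul /chi; case: (asboolP (S i)) => _; rewrite ?mulr1 ?mulr0.
Qed.

Lemma chi1_neq0 i : chi [set i] i != 0.
Proof. by rewrite chi_at // oner_neq0. Qed.

Lemma RI_ind (J : set V) x : right_ideal J -> J x -> J (chi (supp x)).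
Proof.
move=> [JR [_ [_ Jmul]]] Jx; rewrite -vmul_pinv; apply: Jmul => //.
by apply: Rs_pinv; exact: JR.
Qed.

Section Hom.
Variables (J M : set V) (phi : V -> V).
Hypotheses (RJ : right_ideal J) (hphi : hom_on J M phi).

Lemma H1 x : J x -> phi x = vmul (phi (chi (supp x))) x.
Proof.
move=> Jx; have [JR _] := RJ; have [_ [_ Hmul]] := hphi.
rewrite -Hmul; [by rewrite vmul_chi_supp|exact: RI_ind|exact: JR].
Qed.

Lemma H2 x i : J x -> x i = 0 -> phi (chi (supp x)) i = 0.
Proof.
move=> Jx xi; have [JR _] := RJ; have [_ [_ Hmul]] := hphi.
have eJ := RI_ind RJ Jx.
have : phi (chi (supp x)) = vmul (phi (chi (supp x))) (chi (supp x)).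
  by rewrite -Hmul ?chi_idem //; apply: JR.
move=> /(congr1 (fun f => f i)); rewrite /vmul chi_nat ?mulr0 //=.
by rewrite suppE xi eqxx.
Qed.

Lemma H3 x y i : J x -> J y -> x i != 0 -> y i != 0 ->
  phi (chi (supp x)) i = phi (chi (supp y)) i.
Proof.
move=> Jx Jy xi yi; have [JR _] := RJ; have [_ [_ Hmul]] := hphi.
have ex := RI_ind RJ Jx; have ey := RI_ind RJ Jy.
have := Hmul _ _ ex (JR _ ey); rewrite vmulC Hmul //; last exact: JR.
move=> /(congr1 (fun f => f i)); rewrite /vmul !chi_at // !mulr1 => ->.
by [].
Qed.

Definition glue : V := fun i =>
  match pselect (exists x, J x /\ x i != 0) with
  | left h => phi (chi (supp (projT1 (cid h)))) i
  | right _ => 0 end.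

Lemma G1 x i : J x -> x i != 0 -> glue i = phi (chi (supp x)) i.
Proof.
move=> Jx xi; rewrite /glue; case: pselect => [h|nh]; last first.
  by exfalso; apply: nh; exists x.
by case: (cid h) => /= y [Jy yi]; apply: H3.
Qed.

Lemma G2 i : glue i != 0 -> exists x, J x /\ x i != 0.
Proof. by rewrite /glue; case: pselect => // _; rewrite eqxx. Qed.

Lemma G3 x : J x -> vmul glue x = phi x.
Proof.
move=> Jx; rewrite (H1 Jx); apply/funext => i; rewrite /vmul.
case: (eqVneq (x i) 0) => [->|xi]; first by rewrite !mulr0.
by rewrite (G1 Jx xi).
Qed.

End Hom.

Lemma hom_vmul (M : set V) (m : V) : (forall r, Rs r -> M (vmul m r)) -> hom_on Rs M (vmul m).
Proof.
move=> hM; split => //; split.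
  by move=> x y _ _; apply/funext => i; rewrite /vmul /vadd mulrDr.
by move=> x r _ _; rewrite vmulA.
Qed.

End Ring.

Section Ring2.
Variables (K : fieldType) (I : Type).
Local Open Scope ring_scope.
Local Notation V := (I -> K).
Local Notation Rs := (@Rset K I).
Local Notation supp := (@Defs.support K I).
Local Notation chi := (@chi K I).
Local Notation vzero := (@vzero K I).

Lemma GI1 (G : set V) : G `<=` gen_ideal G.
Proof. by move=> g Gg J _ GJ; apply: GJ. Qed.

Lemma GI2 (G J : set V) : right_ideal J -> G `<=` J -> gen_ideal G `<=` J.
Proof. by move=> RJ GJ x; apply. Qed.

Lemma GI3 (G : set V) : G `<=` Rs -> right_ideal (gen_ideal G).
Proof.
move=> GR; split; first exact: GI2 (@Rs_ideal K I) GR.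
split; first by move=> J [_ [J0 _]] _.
split.
  move=> x y Gx Gy J RJ GJ; have [_ [_ [Jadd _]]] := RJ.
  by apply: Jadd; [apply: Gx|apply: Gy].
move=> x r Gx Rr J RJ GJ; have [_ [_ [_ Jmul]]] := RJ.
by apply: Jmul => //; apply: Gx.
Qed.

Lemma supp_add (x y : V) : supp (vadd x y) `<=` supp x `|` supp y.
Proof.
move=> i; rewrite !suppE => h; case: (eqVneq (x i) 0) => [x0|]; last by left.
by right; move: h; rewrite /vadd x0 add0r.
Qed.

Lemma supp_mul (x r : V) : supp (vmul x r) `<=` supp x.
Proof. by move=> i; rewrite !suppE /vmul mulf_eq0 negb_or => /andP[]. Qed.

Lemma GI_supp (G : set V) x i : G `<=` Rs -> gen_ideal G x -> x i != 0 ->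
  exists2 g, G g & g i != 0.
Proof.
move=> GR gx xi.
pose J0 := [set y : V | Rs y /\ forall j, y j != 0 -> exists2 g, G g & g j != 0].
have RJ0 : right_ideal J0.
  split; first by move=> y [].
  split; first by split; [exact: (@Rs_ideal K I).2.1| move=> j; rewrite /vzero eqxx].
  split.
    move=> y z [Ry hy] [Rz hz]; split; first exact: Rs_add.
    move=> j h; have /supp_add[] := h; [exact: hy|exact: hz].
  move=> y r [Ry hy] Rr; split; first exact: Rs_mul.
  by move=> j /supp_mul; apply: hy.
have : J0 x.
  by apply: (gx J0 RJ0) => g Gg; split; [exact: GR| move=> j gj; exists g].
by move=> [_]; apply.
Qed.

Definition FinM (M : set I) : set V := [set x | finite_set (supp x) /\ supp x `<=` M].

Lemma FinM_ideal M : right_ideal (FinM M).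
Proof.
split; first by move=> x [fx _]; apply: Rs_fin.
split; first by rewrite /FinM /= supp0; split; [exact: finite_set0|].
split.
  move=> x y [fx xM] [fy yM]; split.
    by apply: sub_finite_set (@supp_add x y) _; rewrite finite_setU.
  by move=> i /supp_add[/xM|/yM].
move=> x r [fx xM] _; split; first exact: sub_finite_set (@supp_mul x r) fx.
by move=> i /supp_mul /xM.
Qed.

Definition Js (i : I) : set V := [set y | forall j, j <> i -> y j = 0].

Lemma Js_supp i y : Js i y -> supp y `<=` [set i].
Proof. by move=> h j; rewrite suppE => yj; apply: contrapT => ji; move: yj; rewrite h // eqxx. Qed.

Lemma Js_ideal i : right_ideal (Js i).
Proof.
split; first by move=> y h; apply: Rs_fin; apply: sub_finite_set (Js_supp h) (finite_set1 i).
split; first by move=> j _.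
split; first by move=> y z hy hz j ji; rewrite /vadd hy // hz // addr0.
by move=> y r hy _ j ji; rewrite /vmul hy // mul0r.
Qed.

Lemma Js_chi i : Js i (chi [set i]).
Proof. by move=> j ji; rewrite chi_nat. Qed.

Lemma single_sub (J : set V) x i : right_ideal J -> J x -> x i != 0 -> Js i `<=` J.
Proof.
move=> [JR [_ [_ Jmul]]] Jx xi y hy.
pose r : V := fun j => if `[< j = i >] then y i / x i else 0.
have -> : y = vmul x r.
  apply/funext => j; rewrite /vmul /r; case: (asboolP (j = i)) => [->|ji].
    by rewrite mulrC divfK.
  by rewrite mulr0 hy.
apply: Jmul => //; apply: Rs_fin; apply: sub_finite_set (finite_set1 i) => j.
by rewrite suppE /r; case: (asboolP (j = i)) => //; rewrite eqxx.
Qed.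

Lemma fin_sum (J : set V) x : right_ideal J -> finite_set (supp x) ->
  (forall j, x j != 0 -> J (chi [set j])) -> J x.
Proof.
move=> RJ fx; have [n] := fx; elim: n x fx => [|n IH] x fx.
  rewrite II0 card_eq0 => /eqP s0 _.
  have -> : x = vzero.
    apply/funext => j; case: (eqVneq (x j) 0) => // xj.
    by have : supp x j by []; rewrite s0.
  exact: RJ.2.1.
move=> /eq_cardSP[a sa san] hj.
pose y : V := fun j => if `[< j = a >] then 0 else x j.
have -> : x = vadd (vmul (chi [set a]) x) y.
  apply/funext => j; rewrite /vadd /vmul /y; case: (asboolP (j = a)) => [->|ja].
    by rewrite chi_at // mul1r addr0.
  by rewrite chi_nat // mul0r add0r.
have [_ [_ [Jadd Jmul]]] := RJ.
have sy : supp y = supp x `\ a.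
  apply/seteqP; split => j; rewrite /setD !suppE /y /=; case: (asboolP (j = a)) => ja.
  - by rewrite eqxx.
  - by [].
  - by case.
  - by case.
apply: Jadd.
  by apply: Jmul; [exact: hj a sa|exact: Rs_fin].
apply: IH.
- by rewrite sy; apply: sub_finite_set fx => j [].
- by rewrite sy.
- move=> j; rewrite /y; case: (asboolP (j = a)) => ja; first by rewrite eqxx.
  exact: hj.
Qed.

Definition Fin := FinM [set: I].

Lemma minimal_sub (J : set V) : minimal_right_ideal J -> J `<=` Fin.
Proof.
move=> [RJ [Jn0 Jmin]].
have [x [Jx xn0]] : exists x, J x /\ x <> vzero.
  apply: contrapT => h; apply: Jn0; apply/seteqP; split => y.
    by move=> Jy; apply: contrapT => yn; apply: h; exists y.
  by move=> ->; exact: RJ.2.1.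
have [i xi] : exists i, x i != 0.
  apply: contrapT => h; apply: xn0; apply/funext => i.
  by case: (eqVneq (x i) 0) => // xi; exfalso; apply: h; exists i.
have sub := single_sub RJ Jx xi.
case: (Jmin _ (Js_ideal i) sub) => [h|<-].
  by have := (@Js_chi i); rewrite h => e; have := chi1_neq0 K i; rewrite e /vzero eqxx.
move=> y hy; split => //; exact: sub_finite_set (Js_supp hy) (finite_set1 i).
Qed.

Lemma Js_minimal i : minimal_right_ideal (Js i).
Proof.
split; first exact: Js_ideal.
split.
  by move=> h; have := (@Js_chi i); rewrite h => e; have := chi1_neq0 K i; rewrite e /vzero eqxx.
move=> J' RJ' sub; case: (pselect (exists y, J' y /\ y i != 0)) => [[y [J'y yi]]|nh].
  by right; apply/seteqP; split => //; exact: single_sub RJ' J'y yi.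
left; apply/seteqP; split => y; last by move=> ->; exact: RJ'.2.1.
move=> J'y; apply/funext => j; case: (pselect (j = i)) => [->|ji]; last exact: (sub _ J'y).
by case: (eqVneq (y i) 0) => // yi; exfalso; apply: nh; exists y.
Qed.

Lemma Soc_Fin : @Soc K I = Fin.
Proof.
apply/seteqP; split.
  apply: GI2 (FinM_ideal _) _ => x [J mJ Jx]; exact: minimal_sub mJ _ Jx.
move=> x [fx _] J' RJ' sub; apply: fin_sum RJ' fx _ => j _; apply: sub.
by exists (Js j); [exact: Js_minimal|exact: Js_chi].
Qed.

End Ring2.

Section Main.
Variables (K : fieldType) (I : Type).
Local Open Scope ring_scope.
Local Notation V := (I -> K).
Local Notation Rs := (@Rset K I).
Local Notation supp := (@Defs.support K I).
Local Notation chi := (@chi K I).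
Local Notation vzero := (@vzero K I).
Local Notation one := (@Aux.one K I).

Lemma vmul1 (x : V) : vmul one x = x.
Proof. by apply/funext => i; rewrite /vmul /one mul1r. Qed.

Lemma chi1_mul (S : set I) i0 : S i0 -> vmul (chi S) (chi [set i0]) = chi [set i0].
Proof.
move=> Si0; apply/funext => k; rewrite /vmul; case: (pselect (k = i0)) => [->|ki].
  by rewrite !chi_at // mul1r.
by rewrite (@chi_nat _ _ [set i0]) // mulr0.
Qed.

Lemma partA (L : set I) : infinite_set L -> countable L ->
  @Msub K I (Crd L) = @Soc K I.
Proof.
move=> iL cL; rewrite Soc_Fin; apply/seteqP; split => x /=.
  move=> [sL nLs]; split => //; apply: contrapT => ifs; apply: nLs.
  have cs : countable (supp x) := card_le_trans sL cL.
  have /card_eqPle[_ Ns] := eq_card_nat cs ifs.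
  exact: card_le_trans cL Ns.
by move=> [fs _]; apply: sm_finite.
Qed.

Lemma partB : @Msub K I Plus = [set: V].
Proof. by apply/seteqP; split => // x _; exact: card_leT. Qed.

Lemma partC_sub (l m : kcard I) : kcard_lt l m -> @Msub K I l `<=` @Msub K I m.
Proof.
case: l => [L|] //; case: m => [M|] //= => [[LM nML]|_] x /= [sL nLs].
  split; first exact: card_le_trans sL LM.
  by move=> Ms; apply: nML; apply: card_le_trans Ms sL.
exact: card_leT.
Qed.

Lemma partC (l m : kcard I) : kcard_ok l -> kcard_ok m -> kcard_lt l m ->
  @Msub K I l `<=` @Msub K I m /\ @Msub K I l <> @Msub K I m.
Proof.
move=> okl okm ltlm; split; first exact: partC_sub.
case: l okl ltlm => [L|] //= okl ltlm e.
have : @Msub K I m (chi L).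
  case: m okm ltlm e => [M|] //= okm; last by move=> *; exact: card_leT.
  by move=> [LM nML] e; rewrite supp_ind.
rewrite -e /= supp_ind => -[_]; apply; exact: card_lexx.
Qed.

Lemma partD (kinf : infinite_set [set: I]) (l : kcard I) : kcard_limit l ->
     (exists m, kcard_ok m /\ kcard_lt m l) ->
     @Msub K I l = \bigcup_(m in [set m | kcard_ok m /\ kcard_lt m l]) @Msub K I m.
Proof.
case: l => [L|] [okl lim] [m0 [okm0 ltm0]].
  apply/seteqP; split; last by move=> x [m [okm ltm] xm]; apply: partC_sub ltm _ xm.
  move=> x /= [sL nLs]; case: (pselect (finite_set (supp x))) => fs.
    case: m0 okm0 ltm0 => [M0|] //= okm0 ltm0.
    by exists (Crd M0) => //=; apply: sm_finite.
  have [n [okn [ltn nl]]] := lim (Crd (supp x)) fs (conj sL nLs).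
  exists n => //; case: n okn ltn nl => [N|] //.
have [n [okn [ltn nl]]] := lim (Crd [set: I]) kinf (card_lexx _).
case: n okn ltn nl => [N|] //= _ [TN nNT] _.
by exfalso; apply: nNT; exact: card_leT.
Qed.


Lemma partE : @gamma_is K I Plus.
Proof.
split; first by [].
split.
  move=> J RJ; have [JR [_ [Jadd Jmul]]] := RJ.
  pose D := [set j | J (chi [set j])].
  have Rchi j : Rs (chi [set j]) by apply: Rs_chi_fin; exact: finite_set1.
  have DJ y j : J y -> y j != 0 -> D j.
    by move=> Jy yj; apply: (single_sub RJ Jy yj); exact: (@Js_chi _ _ j).
  case: (pselect (exists x0, J x0 /\ infinite_set (supp x0))) => [[x0 [Jx0 ix0]]|nA].
    have cof : finite_set (~` supp x0).
      by case: (Rs_supp (JR _ Jx0)) => // /ix0.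
    have [i0 si0] := infinite_setN0 ix0.
    pose e0 := chi (supp x0).
    pose f := fun j => if `[< j = i0 >] then e0 else chi [set j].
    exists (f @` D); split.
      by move=> _ [j _ <-]; rewrite /f; case: (asboolP (j = i0)) => _;
        [exact: Rs_cofin|exact: Rchi].
    split; first exact: card_le_trans (card_image_le f D) (card_leT D).
    apply/seteqP; split; last first.
      refine (GI2 RJ _) => _ [j Dj <-]; rewrite /f; case: (asboolP (j = i0)) => _.
        exact: RI_ind RJ Jx0.
      exact: Dj.
    move=> y Jy J' RJ' GJ'; have [J'R [_ [J'add J'mul]]] := RJ'.
    have e0J' : J' e0.
      apply: GJ'; exists i0; first exact: DJ Jx0 si0.
      by rewrite /f; case: (asboolP (i0 = i0)).
    have chiJ' j : D j -> J' (chi [set j]).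
      move=> Dj; case: (pselect (j = i0)) => [->|ji].
        by rewrite -(chi1_mul si0); apply: J'mul.
      have -> : chi [set j] = f j by rewrite /f; case: (asboolP (j = i0)).
      by apply: GJ'; exists j.
    have Ry := JR _ Jy.
    have -> : y = vadd (vmul e0 y) (vmul y (chi (~` supp x0))).
      apply/funext => k; rewrite /vadd /vmul /e0; case: (pselect (supp x0 k)) => h.
        by rewrite chi_at // (@chi_nat _ _ (~` supp x0)) ?mul1r ?mulr0 ?addr0.
      by rewrite chi_nat // (@chi_at _ _ (~` supp x0)) ?mul0r ?mulr1 ?add0r.
    apply: J'add; first by apply: J'mul.
    apply: fin_sum RJ' _ _.
      apply: sub_finite_set cof.
      by move=> k; rewrite vmulC => h; have := supp_mul h; rewrite supp_ind.
    move=> j; rewrite /vmul mulf_eq0 negb_or => /andP[yj _].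
    exact: chiJ' (DJ _ _ Jy yj).
  have fJ y : J y -> finite_set (supp y).
    move=> Jy; apply: contrapT => iy; apply: nA; by exists y.
  exists ((fun j => chi [set j]) @` D); split; first by move=> _ [j _ <-].
  split; first exact: card_le_trans (card_image_le _ D) (card_leT D).
  apply/seteqP; split; last by refine (GI2 RJ _) => _ [j Dj <-].
  move=> y Jy J' RJ' GJ'; apply: fin_sum RJ' (fJ _ Jy) _ => j yj.
  by apply: GJ'; exists j => //; exact: DJ Jy yj.
move=> [M|] okM //= _; exists (FinM M); split; first exact: FinM_ideal.
move=> [G [GR [[GM nMG] e]]].
have cov : M `<=` \bigcup_(g in G) supp g.
  move=> i Mi; have : FinM M (chi [set i]).
    by rewrite /FinM /= supp_ind; split; [exact: finite_set1|move=> j ->].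
  rewrite e => hx; have [g Gg gi] := GI_supp GR hx (chi1_neq0 K i).
  by exists g.
have fin g : G g -> finite_set (supp g).
  by move=> Gg; have [] : FinM M g by rewrite e; apply: GI1.
have [_] := sm_cover okM (conj GM nMG) cov fin.
by apply; exact: card_lexx.
Qed.


Lemma partF (L : set I) : infinite_set L -> @strictly_lam_injective K I L (@Msub K I (Crd L)).
Proof.
move=> iL; split.
  move=> J RJ [G [GR [sG eJ]]] phi hphi.
  pose m := @Aux.glue K I J phi.
  have JG g : G g -> J g by move=> Gg; rewrite eJ; apply: GI1.
  have W : supp m `<=` [set i | exists2 g, G g & g i != 0 /\ phi (chi (supp g)) i != 0].
    move=> i mi; have [x [Jx xi]] := G2 mi.
    have [g Gg gi] := GI_supp GR (eq_ind _ (fun X => X x) Jx _ eJ) xi.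
    exists g => //; split => //.
    by rewrite -(G1 RJ hphi (JG _ Gg) gi).
  have key : small L (supp m).
    case: (pselect (exists2 g0, G g0 & finite_set (~` supp g0))) => [[g0 Gg0 cof]|nc].
      have Jg0 := JG _ Gg0.
      have s0 : small L (supp (phi (chi (supp g0)))) := hphi.1 _ (RI_ind RJ Jg0).
      apply: sm_le (sm_U iL s0 cof) (subset_card_le _).
      move=> i mi; have [g Gg [gi pgi]] := W i mi.
      case: (pselect (supp g0 i)) => h; last by right.
      by left; rewrite suppE (H3 RJ hphi Jg0 (JG _ Gg) h gi).
    have fG g : G g -> finite_set (supp g).
      move=> Gg; case: (Rs_supp (GR _ Gg)) => // cf; exfalso; apply: nc; by exists g.
    apply: (sm_cover iL sG _ fG).
    by move=> i /W [g Gg [gi _]]; exists g.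
  exists (vmul m); split; last by move=> x Jx; exact: (G3 RJ hphi Jx).
  apply: hom_vmul => r Rr /=.
  by apply: sm_le key (subset_card_le (@supp_mul _ _ _ _)).
move=> h.
pose G := (fun j => chi [set j]) @` L.
have Rchi j : Rs (chi [set j]) by apply: Rs_chi_fin; exact: finite_set1.
have GR : G `<=` Rs by move=> _ [j _ <-].
have RJ := GI3 GR.
have JF : gen_ideal G `<=` @Fin K I.
  apply: GI2 (@FinM_ideal K I _) _ => _ [j _ <-]; split => //.
  by rewrite supp_ind; exact: finite_set1.
have hid : hom_on (gen_ideal G) (@Msub K I (Crd L)) id.
  split; last by split.
  by move=> x Jx /=; apply: sm_finite => //; have [] := JF _ Jx.
have [psi [[psiM [_ psimul]] ext]] := h _ RJ (ex_intro _ G (conj GR (conj (card_image_le _ L) erefl))) id hid.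
have Lsub : L `<=` supp (psi one).
  move=> j Lj; have Jc : gen_ideal G (chi [set j]) by apply: GI1; exists j.
  have := psimul one _ (@Rs_one K I) (Rchi j).
  rewrite vmul1 ext // => /(congr1 (fun f => f j)); rewrite /vmul chi_at // mulr1 => e.
  by rewrite suppE -e oner_neq0.
have [_ nL] := psiM one (@Rs_one K I).
by apply: nL; exact: subset_card_le Lsub.
Qed.

Lemma partG : @injective_mod K I (@Msub K I Plus).
Proof.
move=> J RJ _ phi hphi; exists (vmul (@Aux.glue K I J phi)); split; last by move=> x Jx; exact: (G3 RJ hphi Jx).
by apply: hom_vmul => r _ /=; exact: card_leT.
Qed.

End Main.
End Aux.

Theorem theorem8p2 (K : fieldType) (I : Type) (kappa_inf : infinite_set [set: I]) :
  (* M_{aleph_0} = Soc(R) *)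
  (forall L : set I, infinite_set L -> countable L ->
     @Msub K I (Crd L) = @Soc K I) /\
  (* M_{kappa^+} = K^kappa *)
  @Msub K I (@Plus I) = [set: I -> K] /\
  (* strictly increasing chain *)
  (forall l m : kcard I, kcard_ok l -> kcard_ok m -> kcard_lt l m ->
     @Msub K I l `<=` @Msub K I m /\ @Msub K I l <> @Msub K I m) /\
  (* continuity at limit cardinals > aleph_0 *)
  (forall l : kcard I, kcard_limit l ->
     (exists m, kcard_ok m /\ kcard_lt m l) ->
     @Msub K I l = \bigcup_(m in [set m | kcard_ok m /\ kcard_lt m l]) @Msub K I m) /\
  (* (i) *)
  @gamma_is K I (@Plus I) /\
  (* (ii) *)
  (forall L : set I, infinite_set L ->
     @strictly_lam_injective K I L (@Msub K I (Crd L))) /\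
  (* (iii) *)
  @injective_mod K I (@Msub K I (@Plus I)).
Proof.
split; first by move=> L iL cL; exact: (@Aux.partA K I L iL cL).
split; first exact: (@Aux.partB K I).
split; first by move=> l m okl okm lt; exact: (@Aux.partC K I l m okl okm lt).
split; first by move=> l lim ex; exact: (@Aux.partD K I kappa_inf l lim ex).
split; first exact: (@Aux.partE K I).
split; first by move=> L iL; exact: (@Aux.partF K I L iL).
exact: (@Aux.partG K I).
Qed.
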